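(* 1. There exists an infinite word whose letter frequencies all exist and are rational but which is not weak abelian periodic. 2. If an infinite word $w$ over a finite alphabet has a letter whose frequency in $w$ exists and is irrational, then $w$ is not weak abelian periodic. 3. If an infinite binary word $w$ does not have frequencies of letters, then $w$ is weak abelian periodic. 4. There exists an infinite ternary word which does not have frequencies of letters and which is not weak abelian periodic.
   Context: For a finite word $u$, $|u|_a$ is the number of occurrences of the letter $a$ in $u$, and $\rho_a(u)=|u|_a/|u|$ for nonempty $u$. For an infinite word $w$, the frequency of a letter $a$ in $w$ is $\rho_a(w)=\lim_{n\to\infty}\rho_a(\mathrm{pref}_n(w))$ when this limit exists, where $\mathrm{pref}_n(w)$ is the prefix of length $n$; $w$ ''does not have frequencies of letters'' if this limit fails to exist for some letter. An infinite word $w$ over a finite alphabet $\Sigma$ is weak abelian periodic if $w=v_0v_1v_2\cdots$ with $v_0$ finite and $v_1,v_2,\dots$ nonempty finite words such that $\rho_a(v_i)=\rho_a(v_j)$ for all $a\in\Sigma$ and all $i,j\ge1$. *)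

(* Defs.v *)
From Stdlib Require Import Reals QArith.
From mathcomp Require Import all_boot.
Open Scope nat_scope.
Set Implicit Arguments. Unset Strict Implicit. Unset Printing Implicit Defensive.

Definition occ (Sigma : finType) (w : nat -> Sigma) (a : Sigma) (i j : nat) : nat :=
  count (fun k => w k == a) (iota i (j - i)).

(* rho_a(w[i..j)) = |w[i..j)|_a / |w[i..j)| (meaningful for i < j). *)
Definition rho (Sigma : finType) (w : nat -> Sigma) (a : Sigma) (i j : nat) : R :=
  Rdiv (INR (occ w a i j)) (INR (j - i)).

Definition freq_is (Sigma : finType) (w : nat -> Sigma) (a : Sigma) (l : R) : Prop :=
  Un_cv (fun n => rho w a 0 n.+1) l.

Definition freq_exists (Sigma : finType) (w : nat -> Sigma) (a : Sigma) : Prop :=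
  exists l : R, freq_is w a l.

Definition has_letter_freqs (Sigma : finType) (w : nat -> Sigma) : Prop :=
  forall a : Sigma, freq_exists w a.

Definition is_rational (x : R) : Prop := exists q : Q, x = Q2R q.

(* Weak abelian periodicity: w = v0 v1 v2 ... with v0 = w[0..b 0) and
   v_(i+1) = w[b i .. b (i+1)), b strictly increasing (so v_1, v_2, ... are
   nonempty), and rho_a(v_i) = rho_a(v_j) for all letters a and all i, j >= 1. *)
Definition weak_abelian_periodic (Sigma : finType) (w : nat -> Sigma) : Prop :=
  exists b : nat -> nat,
    (forall i, b i < b i.+1) /\
    (forall (a : Sigma) (i j : nat),
        rho w a (b i) (b i.+1) = rho w a (b j) (b j.+1)).

(* Main.v *)
Require Import Defs.
From Stdlib Require Import Reals QArith Lra Lia ZArith Classical ClassicalEpsilon.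
From mathcomp Require Import all_boot.
From mathcomp Require Import zify.
Open Scope nat_scope.
Module MA.

Section Basics.
Variables (Sigma : finType) (w : nat -> Sigma).

Lemma occ_split a i j k : i <= j -> j <= k -> occ w a i k = occ w a i j + occ w a j k.
Proof.
move=> hij hjk; rewrite /occ.
have -> : k - i = (j - i) + (k - j) by lia.
rewrite iotaD count_cat.
have -> : i + (j - i) = j by lia.
done.
Qed.

Lemma occ_nil a i : occ w a i i = 0.
Proof. by rewrite /occ subnn. Qed.

Lemma occ_le a i j : occ w a i j <= j - i.
Proof. by rewrite /occ; apply: leq_trans (count_size _ _) _; rewrite size_iota. Qed.

Lemma occ_S0 a n : occ w a 0 n.+1 = occ w a 0 n + (w n == a).
Proof.
rewrite (@occ_split a 0 n n.+1) //; congr (_ + _).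
by rewrite /occ subSnn /= addn0.
Qed.

Lemma count_compl (T : eqType) (p q : pred T) (s : seq T) :
  (forall x, x \in s -> p x + q x = 1) -> count p s + count q s = size s.
Proof.
elim: s => //= y s IH H.
rewrite addnACA IH ?H ?mem_head // => z hz.
by apply: H; rewrite in_cons hz orbT.
Qed.

Lemma occ_zero a i j : (forall k, i <= k -> k < j -> w k != a) -> occ w a i j = 0.
Proof.
move=> H; rewrite /occ; apply/eqP; rewrite -leqn0 leqNgt -has_count.
apply/hasPn => k; rewrite mem_iota => /andP[h1 h2]; apply: H => //; lia.
Qed.

Lemma occ_compl a x i j : (forall k, i <= k -> k < j -> (w k == a) + (w k == x) = 1) ->
  occ w a i j + occ w x i j = j - i.
Proof.
move=> H; rewrite /occ; rewrite count_compl ?size_iota // => k.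
rewrite mem_iota => /andP[h1 h2]; apply: H => //; lia.
Qed.

Lemma card2_compl a x : #|Sigma| = 2 -> x != a -> forall y : Sigma, (y == a) + (y == x) = 1.
Proof.
move=> hc hxa y.
have h1 : #|predC1 a| <= 1 by rewrite cardC1 hc.
case: (eqVneq y a) => [->|hya]; first by rewrite eq_sym (negbTE hxa).
rewrite /=.
have : y = x.
  move/card_le1_eqP: h1 => H; have := H y x; rewrite !inE /=.
  by move=> /(_ hya hxa) ->.
by move=> ->; rewrite eqxx.
Qed.

End Basics.

End MA.
Import MA.

Module MB.
Local Open Scope R_scope.

Lemma INR_add m n : INR (m + n)%N = (INR m + INR n).
Proof. by rewrite -plusE plus_INR. Qed.
Lemma INR_mul m n : INR (m * n)%N = (INR m * INR n).
Proof. by rewrite -multE mult_INR. Qed.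
Lemma INR_sub m n : (n <= m)%N -> INR (m - n)%N = (INR m - INR n).
Proof. move=> h; rewrite -minusE minus_INR //; exact/leP. Qed.
Lemma INR_gt0 n : (0 < n)%N -> (0 < INR n).
Proof. move=> h; apply: lt_0_INR; exact/ltP. Qed.

Lemma div_lt (x y e : R) : (0 < y) -> (x < e * y) -> (x / y < e).
Proof.
move=> hy h. apply (Rmult_lt_reg_r y) => //.
replace (x / y * y) with x by (field; lra). lra.
Qed.

Section Block.
Variables (Sigma : finType) (w : nat -> Sigma) (a : Sigma) (b : nat -> nat).
Hypothesis hb : forall i, (b i < b i.+1)%N.
Hypothesis hrho : forall i j, rho w a (b i) (b i.+1) = rho w a (b j) (b j.+1).

Lemma b_ge i : (i + b 0 <= b i)%N.
Proof. elim: i => // i IH; have := hb i; lia. Qed.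

Lemma block_occ i :
  INR (occ w a (b 0) (b i)) = (rho w a (b 0) (b 1) * INR (b i - b 0)%N).
Proof.
elim: i => [|i IH]; first by rewrite occ_nil subnn /=; ring.
have h1 := b_ge i; have h2 := hb i.
rewrite (@occ_split _ w a (b 0) (b i) (b i.+1)); try lia.
have -> : (b i.+1 - b 0 = (b i - b 0) + (b i.+1 - b i))%N by lia.
rewrite !INR_add IH -(hrho i 0) /rho.
have hp : (0 < INR (b i.+1 - b i)%N) by apply: INR_gt0; lia.
field; lra.
Qed.

Lemma block_freq l : freq_is w a l -> l = rho w a (b 0) (b 1).
Proof.
move=> hl; set r := rho w a (b 0) (b 1).
apply: NNPP => hne.
have he : (0 < Rabs (l - r) / 2).
  have : (l - r <> 0) by lra.
  move/Rabs_no_R0 => ?; have := Rabs_pos (l - r); lra.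
set eps := (Rabs (l - r) / 2).
case: (hl eps he) => N hN.
set C := INR (occ w a 0 (b 0)); set B := INR (b 0).
set K := Rabs (C - r * B).
case: (INR_archimed eps K he) => M hM.
pose i := (N.+1 + M)%N.
have hbi : (i <= b i)%N by have := b_ge i; lia.
have hu := hN (b i).-1 ltac:(apply/leP; lia).
rewrite /rho prednK in hu; last by lia.
rewrite subn0 (@occ_split _ w a 0 (b 0) (b i)) // in hu; last by have := b_ge i; lia.
rewrite INR_add block_occ -/r INR_sub in hu; last by have := b_ge i; lia.
rewrite -/C -/B in hu.
have hbp : (0 < INR (b i)) by apply: INR_gt0; lia.
have hMi : (INR M <= INR (b i)) by apply: le_INR; apply/leP; lia.
have e1 : ((C + r * (INR (b i) - B)) / INR (b i) - r = (C - r * B) / INR (b i)).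
  by field; lra.
have e2 : (Rabs ((C - r * B) / INR (b i)) < eps).
  have hK1 : (K < eps * INR (b i)) by have := Rmult_le_compat_l eps _ _ (Rlt_le _ _ he) hMi; lra.
  have hK2 := Rle_abs (C - r * B); have hK3 := Rle_abs (- (C - r * B)); rewrite Rabs_Ropp in hK3.
  rewrite -/K in hK2 hK3.
  apply: Rabs_def1; first by apply: div_lt => //; lra.
  have : (- (C - r * B) / INR (b i) < eps) by apply: div_lt => //; lra.
  have -> : (- (C - r * B) / INR (b i) = - ((C - r * B) / INR (b i))) by field; lra.
  lra.
rewrite /R_dist in hu. rewrite -e1 in e2.
have := Rabs_triang ((C + r * (INR (b i) - B)) / INR (b i) - l)
   (-((C + r * (INR (b i) - B)) / INR (b i) - r)).
rewrite Rabs_Ropp.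
have -> : ((C + r * (INR (b i) - B)) / INR (b i) - l +
   - ((C + r * (INR (b i) - B)) / INR (b i) - r) = -(l - r)) by ring.
rewrite Rabs_Ropp; move=> ?; have : eps = Rabs (l - r) / 2 by []; lra.
Qed.

End Block.

Lemma ratio_rational o n : (0 < n)%N -> is_rational (INR o / INR n).
Proof.
move=> hn; exists (Z.of_nat o # Pos.of_nat n)%Q.
rewrite /Q2R /= -INR_IZR_INZ.
have -> : Z.pos (Pos.of_nat n) = Z.of_nat n.
  by rewrite -Znat.positive_nat_Z Nat2Pos.id //; lia.
by rewrite -INR_IZR_INZ.
Qed.

Lemma part2 (Sigma : finType) (w : nat -> Sigma) :
  (exists (a : Sigma) (l : R), freq_is w a l /\ ~ is_rational l) ->
  ~ weak_abelian_periodic w.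
Proof.
move=> [a [l [hl hr]]] [b [hb hrho]].
apply: hr; rewrite (@block_freq _ w a b hb (hrho a) l hl) /rho.
apply: ratio_rational.
have := hb 0%N; lia.
Qed.

End MB.
Import MB.

Module MC.
Local Open Scope R_scope.

Definition step (k : nat) : bool := Nat.sqrt k.+1 != Nat.sqrt k.

Section Step.
Variables (Sigma : finType) (w : nat -> Sigma) (a : Sigma).
Hypothesis hw : forall k, (w k == a) = step k.

Lemma occ_step n : occ w a 0 n = Nat.sqrt n.
Proof.
elim: n => [|n IH]; first by rewrite occ_nil.
rewrite occ_S0 IH hw /step.
case: (Nat.sqrt_succ_or n) => ->; last by rewrite eqxx addn0.
have -> : ((Nat.sqrt n).+1 == Nat.sqrt n) = false by apply/eqP; lia.
by rewrite addn1.
Qed.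

Lemma freq_step : freq_is w a 0.
Proof.
move=> eps he.
case: (INR_archimed eps 1 he) => K hK.
exists (K * K)%N => n /leP hn.
rewrite /rho occ_step subn0 /R_dist Rminus_0_r.
set s := Nat.sqrt n.+1.
have [hs1 hs2] := Nat.sqrt_spec n.+1 ltac:(lia).
rewrite -/s in hs1 hs2.
have hKs : (K <= s)%N.
  have : (K * K < s.+1 * s.+1)%N by lia.
  move=> h; case: (leqP K s) => // hsK; exfalso; have := leq_mul hsK hsK; lia.
have hKp : (0 < K)%N.
  case: (posnP K) => // hK0; move: hK; rewrite hK0 /= Rmult_0_l; lra.
have hsp : (0 < s)%N by lia.
have hn1 : (0 < INR n.+1) by apply: INR_gt0.
have hsr : (0 < INR s) by apply: INR_gt0.
rewrite Rabs_right; last by apply: Rle_ge; apply: Rmult_le_pos; [apply: pos_INR | apply: Rlt_le; apply: Rinv_0_lt_compat; lra].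
apply: div_lt => //.
have h1 : (INR s * INR s <= INR n.+1) by rewrite -INR_mul; apply: le_INR; exact: hs1.
have h2 : (INR K <= INR s) by apply: le_INR; apply/leP.
have h3 : 1 < INR s * eps by nra.
nra.
Qed.

Lemma nowap_step : ~ weak_abelian_periodic w.
Proof.
move=> [b [hb hrho]].
have hr := @block_freq _ w a b hb (hrho a) 0 freq_step.
pose s := Nat.sqrt (b 0%N).
pose i := (s.+1 * s.+1)%N.
have ho := @block_occ _ w a b hb (hrho a) i.
rewrite -hr Rmult_0_l in ho.
have ho' : occ w a (b 0%N) (b i) = 0%N by apply: INR_eq.
have hbi := @b_ge b hb i.
have := @occ_split _ w a 0 (b 0%N) (b i) ltac:(lia) ltac:(lia).
rewrite ho' addn0 !occ_step => hsq.
have : (Nat.sqrt i <= Nat.sqrt (b i))%N by apply/leP; apply: Nat.sqrt_le_mono; apply/leP; lia.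
have -> : Nat.sqrt i = s.+1 by exact: Nat.sqrt_square.
rewrite hsq -/s; lia.
Qed.

End Step.

Lemma freq_compl (Sigma : finType) (w : nat -> Sigma) (a x : Sigma) l :
  #|Sigma| = 2%N -> x != a -> freq_is w a l -> freq_is w x (1 - l).
Proof.
move=> hc hxa hl eps he; case: (hl eps he) => N hN; exists N => n hn.
have := hN n hn; rewrite /Rdist /rho !subn0.
have hs := @occ_compl _ w a x 0%N n.+1 (fun k _ _ => @card2_compl _ a x hc hxa (w k)).
have hle := @occ_le _ w x 0%N n.+1.
have -> : occ w x 0 n.+1 = (n.+1 - occ w a 0 n.+1)%N by lia.
rewrite INR_sub; last by lia.
have hp : 0 < INR n.+1 by apply: INR_gt0; lia.
have -> : (INR n.+1 - INR (occ w a 0 n.+1)) / INR n.+1 - (1 - l)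
   = - (INR (occ w a 0 n.+1) / INR n.+1 - l) by field; lra.
by rewrite Rabs_Ropp.
Qed.

End MC.
Import MC.

Module MD.
Local Open Scope R_scope.

Definition w1 (k : nat) : 'I_2 := if step k then ord_max else ord0.

Definition o0 : 'I_3 := @Ordinal 3 0 isT.
Definition o1 : 'I_3 := @Ordinal 3 1 isT.
Definition o2 : 'I_3 := @Ordinal 3 2 isT.

Definition w4 (k : nat) : 'I_3 :=
  if step k then o2 else if odd (trunc_log 4 k) then o1 else o0.

Lemma w4_2 k : (w4 k == o2) = step k.
Proof. by rewrite /w4; case: (step k) => //; case: (odd _). Qed.

Lemma pow4 j : (4 ^ j = 2 ^ j * 2 ^ j)%N.
Proof. by rewrite -expnMn. Qed.

Lemma w4_phase j k : (4 ^ j <= k < 4 ^ j.+1)%N -> trunc_log 4 k = j.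
Proof. by move=> h; apply: trunc_log_eq. Qed.

Lemma w4_odd j k : odd j -> (4 ^ j <= k < 4 ^ j.+1)%N -> w4 k != o0.
Proof. by move=> hj /w4_phase hk; rewrite /w4 hk hj; case: (step k). Qed.

Lemma w4_even j k : ~~ odd j -> (4 ^ j <= k < 4 ^ j.+1)%N ->
  ((w4 k == o0) + (w4 k == o2))%N = 1%N.
Proof. by move=> hj /w4_phase hk; rewrite /w4 hk (negbTE hj); case: (step k). Qed.

Lemma rat_ge c n p q : (0 < n)%N -> (0 < p)%N -> (q * n <= p * c)%N -> INR q / INR p <= INR c / INR n.
Proof.
move=> hn hp h.
have hn' := INR_gt0 _ hn; have hp' := INR_gt0 _ hp.
have h' : INR q * INR n <= INR p * INR c by rewrite -!INR_mul; apply: le_INR; apply/leP.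
apply (Rmult_le_reg_r (INR n)) => //; apply (Rmult_le_reg_r (INR p)) => //.
replace (INR q / INR p * INR n * INR p) with (INR q * INR n) by (field; lra).
replace (INR c / INR n * INR n * INR p) with (INR p * INR c) by (field; lra).
lra.
Qed.

Lemma rat_le c n p q : (0 < n)%N -> (0 < p)%N -> (p * c <= q * n)%N -> INR c / INR n <= INR q / INR p.
Proof.
move=> hn hp h.
have hn' := INR_gt0 _ hn; have hp' := INR_gt0 _ hp.
have h' : INR p * INR c <= INR q * INR n by rewrite -!INR_mul; apply: le_INR; apply/leP.
apply (Rmult_le_reg_r (INR n)) => //; apply (Rmult_le_reg_r (INR p)) => //.
replace (INR q / INR p * INR n * INR p) with (INR q * INR n) by (field; lra).
replace (INR c / INR n * INR n * INR p) with (INR p * INR c) by (field; lra).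
lra.
Qed.

Lemma w4_nofreq : ~ freq_exists w4 o0.
Proof.
move=> [l hl].
have he : 1 / 8 > 0 by lra.
case: (hl _ he) => N hN.
pose je := (2 * N + 2)%N; pose ee := (2 ^ je)%N.
have hee : (4 <= ee)%N.
  have : (0 < 2 ^ (2 * N))%N by rewrite expn_gt0.
  rewrite /ee /je addn2 !expnS; lia.
have heN : (N < ee)%N.
  have := @ltn_expl 2 je isT; rewrite /ee /je; lia.
have hlow : (3 * (ee * ee) - 2 * ee <= occ w4 o0 0 (4 * (ee * ee)))%N.
  have h4 : (4 ^ je = ee * ee)%N by rewrite pow4.
  have h4' : (4 ^ je.+1 = 4 * (ee * ee))%N by rewrite expnS h4.
  rewrite (@occ_split _ w4 o0 0 (ee * ee) (4 * (ee * ee))); try lia.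
  have hc := @occ_compl _ w4 o0 o2 (ee * ee) (4 * (ee * ee)).
  have hc' : (occ w4 o0 (ee * ee) (4 * (ee * ee)) + occ w4 o2 (ee * ee) (4 * (ee * ee))
       = 4 * (ee * ee) - ee * ee)%N.
    apply: hc => k h1 h2; apply: (@w4_even je); first by rewrite /je addn2 /= oddM.
    by rewrite h4 h4' h1 h2.
  have hs := @occ_split _ w4 o2 0 (ee * ee) (4 * (ee * ee)) ltac:(lia) ltac:(lia).
  rewrite (@occ_step _ w4 o2 w4_2) in hs.
  have hsq : Nat.sqrt (4 * (ee * ee)) = (2 * ee)%N.
    have -> : (4 * (ee * ee) = (2 * ee) * (2 * ee))%N by rewrite mulnACA.
    exact: Nat.sqrt_square.
  rewrite hsq in hs.
  lia.
have hNm : forall m, (N < m)%N -> Rabs (INR (occ w4 o0 0 m) / INR m - l) < 1 / 8.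
  move=> m hm; have := hN m.-1 ltac:(apply/leP; lia).
  by rewrite /Rdist /rho prednK ?subn0; last lia.
pose jo := (2 * N + 1)%N; pose eo := (2 ^ jo)%N.
have heo : (N < eo)%N by have := @ltn_expl 2 jo isT; rewrite /eo /jo; lia.
have hup : (occ w4 o0 0 (4 * (eo * eo)) <= eo * eo)%N.
  have h4 : (4 ^ jo = eo * eo)%N by rewrite pow4.
  have h4' : (4 ^ jo.+1 = 4 * (eo * eo))%N by rewrite expnS h4.
  rewrite (@occ_split _ w4 o0 0 (eo * eo) (4 * (eo * eo))); try lia.
  rewrite (@occ_zero _ w4 o0 (eo * eo) (4 * (eo * eo))); last first.
    move=> k h1 h2; apply: (@w4_odd jo); first by rewrite /jo addn1 /= oddM.
    by rewrite h4 h4' h1 h2.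
  have := @occ_le _ w4 o0 0 (eo * eo); lia.
have r1 : 5 / 8 <= INR (occ w4 o0 0 (4 * (ee * ee))) / INR (4 * (ee * ee)).
  have -> : 5 / 8 = INR 5 / INR 8 by simpl; field.
  apply: rat_ge => //; [lia | nia].
have r2 : INR (occ w4 o0 0 (4 * (eo * eo))) / INR (4 * (eo * eo)) <= 1 / 4.
  have -> : 1 / 4 = INR 1 / INR 4 by simpl; field.
  apply: rat_le => //; [lia | nia].
have a1 := hNm (4 * (ee * ee))%N ltac:(nia).
have a2 := hNm (4 * (eo * eo))%N ltac:(nia).
move/Rabs_def2: a1 => [? ?]; move/Rabs_def2: a2 => [? ?]; lra.
Qed.

Lemma part1 : exists (k : nat) (w : nat -> 'I_k),
      (forall a : 'I_k, exists l : R, freq_is w a l /\ is_rational l) /\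
      ~ weak_abelian_periodic w.
Proof.
exists 2%N, w1; split; last by apply: (@nowap_step _ w1 ord_max) => k; rewrite /w1; case: (step k).
move=> a; have [->|hne] := eqVneq a ord_max.
  exists 0; split; first by apply: freq_step => k; rewrite /w1; case: (step k).
  have -> : 0 = INR 0 / INR 1 by simpl; field.
  exact: ratio_rational.
exists (1 - 0); split.
  apply: (@freq_compl _ w1 ord_max a) => //; first by rewrite card_ord.
  by apply: freq_step => k; rewrite /w1; case: (step k).
have -> : 1 - 0 = INR 1 / INR 1 by simpl; field.
exact: ratio_rational.
Qed.

Lemma part4 : exists w : nat -> 'I_3, ~ has_letter_freqs w /\ ~ weak_abelian_periodic w.
Proof.
exists w4; split; last exact: (@nowap_step _ w4 o2 w4_2).
move=> h; apply: w4_nofreq; exact: h.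
Qed.

End MD.
Import MD.

Module MF.

Lemma pigeon (f : nat -> nat) (P : nat -> Prop) K :
  (forall N, exists n, N <= n /\ P n /\ f n < K) ->
  exists v, forall N, exists n, N <= n /\ P n /\ f n = v.
Proof.
elim: K => [|K IH] H.
  by case: (H 0) => n [_ [_ ]].
case: (classic (forall N, exists n, N <= n /\ P n /\ f n = K)) => hK.
  by exists K.
apply: IH => N.
have [N0 hN0] : exists N0, forall n, N0 <= n -> ~ (P n /\ f n = K).
  apply: NNPP => hc; apply: hK => N1.
  apply: NNPP => hc1; apply: hc; exists N1 => n hn [hp hf]; apply: hc1; by exists n.
case: (H (maxn N N0)) => n [hn [hp hf]].
exists n; split; first lia.
split => //.
have : f n <> K by move=> e; apply: (hN0 n); [lia | by split].
lia.
Qed.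

Lemma ratio_eq o len k m : 0 < len -> 0 < m -> m * o = k * len ->
  Rdiv (INR o) (INR len) = Rdiv (INR k) (INR m).
Proof.
move=> hl hm h.
have hl' := INR_gt0 _ hl; have hm' := INR_gt0 _ hm.
have h' : Rmult (INR m) (INR o) = Rmult (INR k) (INR len) by rewrite -!INR_mul h.
field_simplify_eq; lra.
Qed.

Lemma uniformN (Q : nat -> nat -> Prop) : (forall k, exists N, Q k N) ->
  (forall k N N', Q k N -> N <= N' -> Q k N') -> forall K, exists N, forall k, k < K -> Q k N.
Proof.
move=> H Hm; elim=> [|K [N1 IH]]; first by exists 0.
case: (H K) => N2 h2; exists (maxn N1 N2) => k hk.
case: (ltngtP k K) => hkK; [ | lia | ].
  by apply: Hm (IH k hkK) _; rewrite leq_maxl.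
by subst; apply: Hm h2 _; rewrite leq_maxr.
Qed.

Lemma frac_bounds k M c p : 0 < p -> 0 < M -> k * p <= M * c -> M * c < k.+1 * p ->
  Rle (INR k) (Rmult (INR M) (Rdiv (INR c) (INR p))) /\ Rlt (Rmult (INR M) (Rdiv (INR c) (INR p))) (Rplus (INR k) R1).
Proof.
move=> hp hM h1 h2.
have hp' := INR_gt0 _ hp.
have e : Rmult (Rmult (INR M) (Rdiv (INR c) (INR p))) (INR p) = INR (M * c).
  by rewrite INR_mul; field; lra.
split.
  apply (Rmult_le_reg_r (INR p)) => //; rewrite e -INR_mul; apply: le_INR; exact/leP.
apply (Rmult_lt_reg_r (INR p)) => //; rewrite e.
have -> : Rplus (INR k) R1 = INR k.+1 by rewrite S_INR.
rewrite -INR_mul; apply: lt_INR; exact/ltP.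
Qed.

Lemma frac_close k M c p c' p' : 0 < p -> 0 < p' -> 0 < M ->
  k * p <= M * c -> M * c < k.+1 * p -> k * p' <= M * c' -> M * c' < k.+1 * p' ->
  Rlt (Rabs (Rminus (Rdiv (INR c) (INR p)) (Rdiv (INR c') (INR p')))) (Rinv (INR M)).
Proof.
move=> hp hp' hM h1 h2 h3 h4.
have [b1 b2] := @frac_bounds k M c p hp hM h1 h2.
have [b3 b4] := @frac_bounds k M c' p' hp' hM h3 h4.
have hM' := INR_gt0 _ hM.
set x := Rdiv (INR c) (INR p) in b1 b2 *; set y := Rdiv (INR c') (INR p') in b3 b4 *.
have hi : Rmult (INR M) (Rinv (INR M)) = R1 by field; lra.
apply: Rabs_def1.
  apply (Rmult_lt_reg_l (INR M)) => //; rewrite hi; lra.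
apply (Rmult_lt_reg_l (INR M)) => //.
have -> : Rmult (INR M) (Ropp (Rinv (INR M))) = (Ropp R1) by rewrite Ropp_mult_distr_r_reverse hi.
lra.
Qed.

Section P3.
Variables (Sigma : finType) (w : nat -> Sigma) (a : Sigma).
Hypothesis hcard : #|Sigma| = 2.

Lemma crossing m k d : forall n, k * n <= m * occ w a 0 n ->
  m * occ w a 0 (n + d) < k * (n + d) ->
  exists p, n <= p /\ k * p <= m * occ w a 0 p /\ m * occ w a 0 p.+1 < k * p.+1.
Proof.
elim: d => [|d IH] n h1 h2; first by rewrite addn0 in h2; lia.
case: (leqP (k * n.+1) (m * occ w a 0 n.+1)) => h3.
  have [p [hp1 hp2]] := IH n.+1 h3 ltac:(by rewrite addSnnS).
  exists p; split => //; lia.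
by exists n.
Qed.

Lemma wap_of m k v : 0 < m ->
  (forall N, exists n, N <= n /\ k * n <= m * occ w a 0 n /\ m * occ w a 0 n - k * n = v) ->
  weak_abelian_periodic w.
Proof.
move=> hm H.
pose sel N := constructive_indefinite_description _ (H N).
pose f N := proj1_sig (sel N).
have hf : forall N, N <= f N /\ k * f N <= m * occ w a 0 (f N) /\ m * occ w a 0 (f N) - k * f N = v.
  by move=> N; rewrite /f; case: (sel N).
pose b i := iter i (fun x => f x.+1) (f 0).
have hbS : forall i, b i.+1 = f (b i).+1 by [].
have hb0 : b 0 = f 0 by [].
have hbf : forall i, exists N, b i = f N by case=> [|i]; [exists 0 | exists (b i).+1].
have hb : forall i, b i < b i.+1 by move=> i; rewrite hbS; have := hf (b i).+1; lia.
have hblk : forall i, m * occ w a (b i) (b i.+1) = k * (b i.+1 - b i).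
  move=> i.
  have hs := @occ_split _ w a 0 (b i) (b i.+1) (leq0n _) (ltnW (hb i)).
  have [N1 e1] := hbf i; have [N2 e2] := hbf i.+1.
  have h1 := hf N1; have h2 := hf N2; rewrite -e1 in h1; rewrite -e2 in h2.
  have hbi := hb i.
  move: h1 h2; rewrite hs mulnDr mulnBr.
  set X := m * occ w a 0 (b i); set Y := m * occ w a (b i) (b i.+1).
  set P := k * b i; set Q := k * b i.+1.
  have : P <= Q by rewrite /P /Q leq_mul2l (ltnW hbi) orbT.
  lia.
exists b; split => //.
have key : forall x i, rho w x (b i) (b i.+1) =
   Rdiv (INR (if x == a then k else m - k)) (INR m).
  move=> x i; rewrite /rho.
  have hl : 0 < b i.+1 - b i by have := hb i; lia.
  have hle := @occ_le _ w a (b i) (b i.+1).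
  have hkm : k <= m.
    have := hblk i; move=> e.
    have : k * (b i.+1 - b i) <= m * (b i.+1 - b i) by rewrite -e leq_mul2l hle orbT.
    by rewrite leq_mul2r; case/orP => //; rewrite eqn0Ngt hl.
  case: (eqVneq x a) => [->|hxa]; first exact: ratio_eq.
  apply: ratio_eq => //.
  have hs := @occ_compl _ w a x (b i) (b i.+1) (fun k _ _ => @card2_compl _ a x hcard hxa (w k)).
  have -> : occ w x (b i) (b i.+1) = (b i.+1 - b i) - occ w a (b i) (b i.+1) by lia.
  by rewrite mulnBr hblk -mulnBl.
by move=> x i j; rewrite !key.
Qed.

Lemma decide m k : 0 < m -> ~ weak_abelian_periodic w ->
  (exists N, forall n, N <= n -> k * n <= m * occ w a 0 n) \/
  (exists N, forall n, N <= n -> m * occ w a 0 n < k * n).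
Proof.
move=> hm nw; apply: NNPP => H; apply: nw.
have H1 : forall N, exists n, N <= n /\ k * n <= m * occ w a 0 n.
  move=> N; apply: NNPP => hN; apply: H; right; exists N => n hn.
  rewrite ltnNge; apply/negP => h; apply: hN; by exists n.
have H2 : forall N, exists n, N <= n /\ m * occ w a 0 n < k * n.
  move=> N; apply: NNPP => hN; apply: H; left; exists N => n hn.
  rewrite leqNgt; apply/negP => h; apply: hN; by exists n.
have H3 : forall N, exists n, N <= n /\ k * n <= m * occ w a 0 n /\
    m * occ w a 0 n - k * n < k.
  move=> N; case: (H1 N) => n0 [hn0 A0]; case: (H2 n0) => n1 [hn1 B1].
  have := @crossing m k (n1 - n0) n0 A0; rewrite subnKC // => /(_ B1) [p [hp [hA hB]]].
  exists p; split; first lia.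
  split => //.
  move: hB; rewrite occ_S0 mulnDr mulnS.
  set X := m * occ w a 0 p; set Y := m * (w p == a).
  lia.
have [v hv] := @pigeon (fun n => m * occ w a 0 n - k * n)
   (fun n => k * n <= m * occ w a 0 n) k H3.
exact: wap_of hm hv.
Qed.

Lemma freq_of_nowap : ~ weak_abelian_periodic w -> freq_exists w a.
Proof.
move=> nw.
have : Cauchy_crit (fun n => rho w a 0 n.+1).
  move=> eps he.
  case: (INR_archimed eps R1 he) => M hM.
  have hM0 : 0 < M.
    case: (posnP M) => // e; move: hM; rewrite e /=; lra.
  have hM' := INR_gt0 _ hM0.
  have hinv : Rlt (Rinv (INR M)) eps.
    apply (Rmult_lt_reg_l (INR M)) => //.
    have -> : Rmult (INR M) (Rinv (INR M)) = R1 by field; lra.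
    lra.
  have [N hN] := @uniformN (fun k N => (forall n, N <= n -> k * n <= M * occ w a 0 n) \/
       (forall n, N <= n -> M * occ w a 0 n < k * n))
     (fun k => match @decide M k hM0 nw with
               | or_introl (ex_intro N h) => ex_intro _ N (or_introl h)
               | or_intror (ex_intro N h) => ex_intro _ N (or_intror h) end)
     ltac:(move=> k N N' [h|h] hNN'; [left|right] => n hn; apply: h; lia) M.+2.
  exists N => n n' /leP hn /leP hn'.
  rewrite /Rdist /rho !subn0.
  set p := n.+1; set p' := n'.+1.
  set c := occ w a 0 p; set c' := occ w a 0 p'.
  pose k0 := M * c %/ p.
  have A : k0 * p <= M * c by apply: leq_trunc_div.
  have B : M * c < k0.+1 * p by apply: ltn_ceil.
  have hcp : c <= p by have := @occ_le _ w a 0 p; rewrite subn0.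
  have hk0 : k0 <= M.
    have : k0 * p <= M * p by apply: leq_trans A _; rewrite leq_mul2l hcp orbT.
    by rewrite leq_mul2r; case/orP => //; rewrite /p.
  have [hl|hr] := hN k0 ltac:(lia); last by have := hr p ltac:(rewrite /p; lia); lia.
  have [hl2|hr2] := hN k0.+1 ltac:(lia).
    by have := hl2 p ltac:(rewrite /p; lia); lia.
  apply: Rlt_trans hinv.
  apply: (@frac_close k0 M c p c' p') => //.
    by apply: hl; rewrite /p'; lia.
  by apply: hr2; rewrite /p'; lia.
move/R_complete => [l hl]; by exists l.
Qed.

End P3.

End MF.
Import MF.

Theorem proposition3 :
  (* 1 *)
  (exists (k : nat) (w : nat -> 'I_k),
      (forall a : 'I_k, exists l : R, freq_is w a l /\ is_rational l) /\
      ~ weak_abelian_periodic w)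
  /\
  (* 2 *)
  (forall (Sigma : finType) (w : nat -> Sigma),
      (exists (a : Sigma) (l : R), freq_is w a l /\ ~ is_rational l) ->
      ~ weak_abelian_periodic w)
  /\
  (* 3 *)
  (forall (Sigma : finType) (w : nat -> Sigma),
      #|Sigma| = 2 -> ~ has_letter_freqs w -> weak_abelian_periodic w)
  /\
  (* 4 *)
  (exists w : nat -> 'I_3,
      ~ has_letter_freqs w /\ ~ weak_abelian_periodic w).
Proof.
split; first exact: part1.
split; first exact: part2.
split; last exact: part4.
move=> Sigma w hc hnf; apply: NNPP => nw; apply: hnf => a.
exact: (@freq_of_nowap Sigma w a hc nw).
Qed.
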